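(* Let $\mathcal{A}\subseteq\mathbb{R}^n$, let $k$ be a kernel on $\mathcal{A}$ with reproducing kernel Hilbert space $H_k$ and norm $\|\cdot\|_k$, and let $h(\cdot,i)\in H_k$ be an unknown function, where $i\in\mathcal{I}$ is fixed. Fix a finite set of sampled parameters $A=\{a_1,\ldots,a_N\}\subseteq\mathcal{A}$ together with the corresponding noisy measurements $\hat h_{A,i}$ of $h(\cdot,i)$. Let $\rho_{A,1}(\cdot,i),\ldots,\rho_{A,q}(\cdot,i)$ be $q$ random RKHS functions, generated independently and identically (conditionally on $A$ and $\hat h_{A,i}$) by the random construction described in the context, and assume that \[ \|h(\cdot,i)\|_k\;\le\;\lim_{q\to\infty}\frac{1}{q}\sum_{j=1}^{q}\|\rho_{A,j}(\cdot,i)\|_k . \] Let $\delta\in(0,1)$ and define \[ w_i:=\sqrt{\frac{\ln\!\big(\tfrac{2}{\delta}\big)\,\Big(\max_{\alpha,x}\|\rho_{A}(\cdot,i)\|_k-\min_{\alpha,x}\|\rho_{A}(\cdot,i)\|_k\Big)^2}{2q}}, \] where the maximum and minimum are taken over all admissible values of the random coefficients $\alpha$ and center points $x$ in the construction. If \[ B_i\;\ge\;\frac{1}{q}\sum_{j=1}^{q}\|\rho_{A,j}(\cdot,i)\|_k+w_i, \] then $B_i\ge\|h(\cdot,i)\|_k$ with probability at least $1-\delta$ (with respect to the random generation of $\rho_{A,1},\ldots,\rho_{A,q}$).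
   Context: Random RKHS function construction: fix an integer $\hat N\gg N$ and a bound $\overline\alpha>0$. Each random function has the form $\rho_{A,j}(\cdot,i)=\sum_{s=1}^{\hat N}\alpha_s k(x_s,\cdot)$, so that $\|\rho_{A,j}(\cdot,i)\|_k^2=\sum_{s=1}^{\hat N}\sum_{t=1}^{\hat N}\alpha_s\alpha_t k(x_s,x_t)$. The first $N$ center points are the samples, $x_1,\ldots,x_N=a_1,\ldots,a_N$, and the first $N$ coefficients $\alpha_1,\ldots,\alpha_N$ are determined by the samples $A$ and measurements $\hat h_{A,i}$ (so that the function interpolates the data up to the measurement noise). The remaining coefficients $\alpha_{N+1},\ldots,\alpha_{\hat N}$ are drawn independently and uniformly from $[-\overline\alpha,\overline\alpha]$, and the remaining center points $x_{N+1},\ldots,x_{\hat N}$ are drawn independently and uniformly from $\mathcal{A}$. Different functions $\rho_{A,j}$, $j=1,\ldots,q$, are generated independently. The measurements are of the form $\hat h(a,i)=h(a,i)+\epsilon$ with $\sigma$-sub-Gaussian noise $\epsilon$. $B_i$ is a candidate upper bound on the RKHS norm $\|h(\cdot,i)\|_k$. *)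

(* Defs.v *)
From HB Require Import structures.
From mathcomp Require Import all_boot all_order all_algebra.
From mathcomp Require Import all_classical all_reals all_analysis.
Set Implicit Arguments. Unset Strict Implicit. Unset Printing Implicit Defensive.
Import Order.TTheory GRing.Theory Num.Theory.
Import numFieldNormedType.Exports.
Local Open Scope classical_set_scope.
Local Open Scope ring_scope.

Definition is_kernel (R : realType) (n : nat) (Adom : set 'rV[R]_n)
  (k : 'rV[R]_n -> 'rV[R]_n -> R) : Prop :=
  (forall x y, Adom x -> Adom y -> k x y = k y x) /\
  (forall (m : nat) (c : 'I_m -> R) (x : 'I_m -> 'rV[R]_n),
     (forall s, Adom (x s)) ->
     0 <= \sum_(s < m) \sum_(t < m) c s * c t * k (x s) (x t)).

(* squared RKHS norm of  sum_s c_s k(x_s, .)  (finite index type I) *)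
Definition comb_sqnorm (R : realType) (n : nat) (I : finType)
  (k : 'rV[R]_n -> 'rV[R]_n -> R) (c : I -> R) (x : I -> 'rV[R]_n) : R :=
  \sum_(s : I) \sum_(t : I) c s * c t * k (x s) (x t).

Definition comb_norm (R : realType) (n : nat) (I : finType)
  (k : 'rV[R]_n -> 'rV[R]_n -> R) (c : I -> R) (x : I -> 'rV[R]_n) : R :=
  Num.sqrt (comb_sqnorm k c x).

(* RKHS norm ||f||_k of an arbitrary function f on Adom (extended real):
   sup of <f, g>_k over g = sum_s c_s k(x_s,.) in the span of kernel sections
   with ||g||_k <= 1 (reproducing property <f, k(x,.)> = f x).  It is finite
   iff f belongs to H_k, and then coincides with the Hilbert norm of f. *)
Definition rkhs_norm (R : realType) (n : nat) (Adom : set 'rV[R]_n)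
  (k : 'rV[R]_n -> 'rV[R]_n -> R) (f : 'rV[R]_n -> R) : \bar R :=
  ereal_sup [set r : \bar R | exists (m : nat) (c : 'I_m -> R) (x : 'I_m -> 'rV[R]_n),
     [/\ forall s, Adom (x s), comb_sqnorm k c x <= 1 &
          r = (\sum_(s < m) c s * f (x s))%:E]].

(* coefficients / centers of rho: first N fixed (data), then K random ones *)
Definition join_fun (T : Type) (N K : nat) (u : 'I_N -> T) (v : 'I_K -> T)
  (s : 'I_N + 'I_K) : T :=
  match s with inl i => u i | inr i => v i end.

(* the RKHS norm of rho = sum_{s <= N} alpha0_s k(a_s, .) + sum_{s > N} alpha_s k(x_s, .) *)
Definition rho_norm (R : realType) (n N K : nat)
  (k : 'rV[R]_n -> 'rV[R]_n -> R) (alpha0 : 'I_N -> R) (a : 'I_N -> 'rV[R]_n)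
  (alpha : 'I_K -> R) (x : 'I_K -> 'rV[R]_n) : R :=
  comb_norm k (join_fun alpha0 alpha) (join_fun a x).

Definition admissible (R : realType) (n K : nat) (Adom : set 'rV[R]_n)
  (abar : R) (alpha : 'I_K -> R) (x : 'I_K -> 'rV[R]_n) : Prop :=
  (forall s, - abar <= alpha s <= abar) /\ (forall s, Adom (x s)).

Definition mutually_independent (R : realType) (d : measure_display)
  (Omega : measurableType d) (P : probability Omega R) (X : nat -> Omega -> R) : Prop :=
  forall (J : seq nat) (B : nat -> set R), uniq J ->
    (forall j, j \in J -> measurable (B j)) ->
    P (\bigcap_(j in [set j | j \in J]) (X j @^-1` B j)) =
    (\prod_(j <- J) P (X j @^-1` B j))%E.

Definition identically_distributed (R : realType) (d : measure_display)
  (Omega : measurableType d) (P : probability Omega R) (X : nat -> Omega -> R) : Prop :=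
  forall j (B : set R), measurable B -> P (X j @^-1` B) = P (X 0%N @^-1` B).

Definition emp_mean (R : realType) (T : Type) (X : nat -> T -> R) (q : nat) (w : T) : R :=
  q%:R^-1 * \sum_(j < q) X j w.

(* Main.v *)
Require Import Defs.
From HB Require Import structures.
From mathcomp Require Import all_boot all_order all_algebra.
From mathcomp Require Import all_classical all_reals all_analysis.
From mathcomp Require Import ring lra measurable_realfun.
Import Order.TTheory GRing.Theory Num.Theory.
Import numFieldNormedType.Exports.
Local Open Scope classical_set_scope.
Local Open Scope ring_scope.

Section Analytic.
Context {R : realType}.

Lemma T1 (v : R) : 0 <= v -> expR v * (1 - v/2) <= 1 + v/2.
Proof.
move=> v0.
pose g := (cst 1 + (2^-1) *: id - expR * (cst 1 - 2^-1 *: id) : R -> R).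
pose dg := fun x : R => (1 - expR x + x * expR x)/2.
have gE : forall y, g y = 1 + y/2 - expR y * (1 - y/2).
  move=> y; rewrite /g /cst /= !fctE /=.
  have -> : (2^-1 : R) *: y = 2^-1 * y by [].
  lra.
have hd : forall x : R, is_derive x 1 g (dg x).
  move=> x.
  have h := is_deriveB (is_deriveD (is_derive_cst (1:R) x 1) (is_deriveZ (2^-1 : R) (is_derive_id x 1)))
   (is_deriveM (is_derive_expR x) (is_deriveB (is_derive_cst (1:R) x 1) (is_deriveZ (2^-1 : R) (is_derive_id x 1)))).
  apply: (is_derive_eq h).
  rewrite /dg /cst /GRing.scale /= !fctE /=.
  have -> : (2^-1 : R) *: x = 2^-1 * x by [].
  lra.
have cg : {within `[0, v], continuous g}.
  apply: derivable_within_continuous => x _.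
  by case: (hd x).
have [c _ eq] := MVT_segment v0 (fun x _ => hd x) cg.
have : 0 <= g v.
  have -> : g v = g v - g 0 by rewrite (gE 0) expR0; lra.
  rewrite eq; apply: mulr_ge0; last by lra.
  rewrite /dg; apply: divr_ge0 => //.
  have := expR_ge1Dx (- c); have h1 := expR_gt0 c.
  rewrite expRN => h2.
  have h3 : (1 - c) * expR c <= 1.
    by rewrite -[leRHS](mulVf (lt0r_neq0 h1)) ler_pM2r.
  lra.
rewrite gE; lra.
Qed.

Lemma T2 (t x : R) : 0 <= t <= 1 -> 0 <= x ->
  t * (1 - t) * (expR x - 1) <= x / 4 * (1 - t + t * expR x).
Proof.
move=> /andP[t0 t1] x0.
set r := expR (x / 2).
have rr : expR x = r * r by rewrite /r -expRD; congr expR; lra.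
have r1 : 1 <= r by have := expR_ge1Dx (x/2); rewrite -/r; lra.
have h1 : r - 1 <= x / 4 * (r + 1).
  have : 0 <= x/2 by lra. move=> /T1; rewrite -/r; nra.
have h2 : t * (1 - t) * ((r + 1) * (r + 1)) <= 1 - t + t * (r * r).
  have : 0 <= ((1 - t) - t * r) ^+ 2 by apply: sqr_ge0.
  rewrite expr2; nra.
have h3 : 0 <= t * (1 - t) * (r + 1) by apply: mulr_ge0; [apply: mulr_ge0|]; lra.
have h4 := ler_wpM2l h3 h1.
rewrite rr; nra.
Qed.

Lemma T3 (t u : R) : 0 <= t <= 1 -> 0 <= u ->
  1 - t + t * expR u <= expR (t * u + u ^+ 2 / 8).
Proof.
move=> tb u0.
pose F := (cst (1 - t) + t *: expR : R -> R).
pose G := ((- t) *: id - 8^-1 *: (id ^+ 2) : R -> R).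
pose H := (F * (expR \o G) : R -> R).
have GE : forall y, G y = - t * y - y ^+ 2 / 8.
  move=> y; rewrite /G /= !fctE /=.
  have -> : (- t) *: y = - t * y by [].
  have -> : 8^-1 *: (y ^+ 2) = 8^-1 * y ^+ 2 by [].
  lra.
have HE : forall y, H y = (1 - t + t * expR y) * expR (- t * y - y ^+ 2 / 8).
  move=> y; rewrite /H /F /= !fctE /= GE.
  have -> : t *: expR y = t * expR y by [].
  by [].
pose dH := fun x : R => expR (G x) * ((1 - t + t * expR x) * (- t - x / 4) + t * expR x).
have hd : forall x : R, is_derive x 1 H (dH x).
  move=> x.
  have hG := is_deriveB (is_deriveZ (- t) (is_derive_id x 1))
                        (is_deriveZ (8^-1 : R) (is_deriveX 2 (is_derive_id x 1))).
  have hF := is_deriveD (is_derive_cst (1 - t) x 1) (is_deriveZ t (is_derive_expR x)).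
  have hEG := is_derive1_comp (is_derive_expR (G x)) hG.
  have h := is_deriveM hF hEG.
  apply: (is_derive_eq h).
  rewrite /dH /F /cst /GRing.scale /= !fctE /=.
  have -> : t *: expR x = t * expR x by [].
  rewrite expr1; lra.
have cg : {within `[0, u], continuous H}.
  apply: derivable_within_continuous => x _.
  by case: (hd x).
have [c] := MVT_segment u0 (fun x _ => hd x) cg.
rewrite in_itv /= => /andP[c0 cu] eq.
have : H u <= 1.
  have H0 : H 0 = 1.
    rewrite HE; have -> : - t * 0 - 0 ^+ 2 / 8 = 0 :> R by rewrite expr2; lra.
    rewrite !expR0; lra.
  have -> : H u = (H u - H 0) + 1 by rewrite H0; lra.
  rewrite eq; suff : dH c * (u - 0) <= 0 by lra.
  apply: mulr_le0_ge0; last by lra.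
  rewrite /dH; apply: mulr_ge0_le0; first exact: expR_ge0.
  have := @T2 t c tb c0.
  lra.
rewrite HE.
have -> : - t * u - u ^+ 2 / 8 = - (t * u + u ^+ 2 / 8) by lra.
by rewrite expRN ler_pdivrMr ?expR_gt0 // mul1r.
Qed.

Lemma T4 (t u : R) : 0 <= t <= 1 ->
  1 - t + t * expR u <= expR (t * u + u ^+ 2 / 8).
Proof.
move=> tb; have [u0|u0] := leP 0 u; first exact: T3.
have tb' : 0 <= 1 - t <= 1 by move: tb => /andP[? ?]; apply/andP; split; lra.
have := @T3 (1 - t) (- u) tb' (ltW (ltac:(lra) : 0 < - u)).
move=> h.
have h2 := ler_wpM2l (expR_ge0 u) h.
rewrite -expRD in h2.
have -> : t * u + u ^+ 2 / 8 = u + ((1 - t) * - u + (- u) ^+ 2 / 8).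
  rewrite sqrrN; lra.
apply: le_trans h2.
rewrite expRN.
have e0 := expR_gt0 u.
have -> : expR u * (1 - (1 - t) + (1 - t) * (expR u)^-1) = t * expR u + (1 - t) * (expR u * (expR u)^-1) by ring.
rewrite mulfV ?lt0r_neq0 //; lra.
Qed.

Lemma chord (x1 x2 l : R) : 0 <= l <= 1 ->
  expR ((1 - l) * x1 + l * x2) <= (1 - l) * expR x1 + l * expR x2.
Proof.
move=> /andP[l0 l1].
set y := (1 - l) * x1 + l * x2.
have A1 : expR y * (1 + (x1 - y)) <= expR x1.
  have -> : expR x1 = expR y * expR (x1 - y) by rewrite -expRD; congr expR; lra.
  by rewrite ler_pM2l ?expR_gt0 // expR_ge1Dx.
have A2 : expR y * (1 + (x2 - y)) <= expR x2.
  have -> : expR x2 = expR y * expR (x2 - y) by rewrite -expRD; congr expR; lra.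
  by rewrite ler_pM2l ?expR_gt0 // expR_ge1Dx.
have B1 := ler_wpM2l (_ : 0 <= 1 - l) A1.
have B2 := ler_wpM2l l0 A2.
have : expR y = (1 - l) * (expR y * (1 + (x1 - y))) + l * (expR y * (1 + (x2 - y))).
  rewrite /y; ring.
move: (B1 ltac:(lra)) B2; lra.
Qed.

Lemma HL (I : finType) (p v : I -> R) (al D s : R) :
  0 < D -> (forall i, 0 <= p i) -> \sum_i p i = 1 ->
  (forall i, al <= v i <= al + D) ->
  \sum_i p i * expR (s * v i) <=
    expR (s * (\sum_i p i * v i) + s ^+ 2 * D ^+ 2 / 8).
Proof.
move=> D0 p0 p1 vb.
pose l i := (v i - al) / D.
pose A := expR (s * al); pose B := expR (s * (al + D)).
have lb : forall i, 0 <= l i <= 1.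
  move=> i; have /andP[h1 h2] := vb i; rewrite /l; apply/andP; split.
    by apply: divr_ge0; lra.
  by rewrite ler_pdivrMr // mul1r; lra.
have vE : forall i, s * v i = (1 - l i) * (s * al) + l i * (s * (al + D)).
  by move=> i; rewrite /l; field; rewrite lt0r_neq0.
have st1 : \sum_i p i * expR (s * v i) <= \sum_i (A * p i + (B - A) * (p i * l i)).
  apply: ler_sum => i _.
  have -> : A * p i + (B - A) * (p i * l i) = p i * ((1 - l i) * A + l i * B) by ring.
  by apply: ler_wpM2l => //; rewrite vE; apply: chord.
set mu := \sum_i p i * v i.
have th : \sum_i p i * l i = (mu - al) / D.
  rewrite /mu /l.
  have -> : \sum_i p i * ((v i - al) / D) = \sum_i (D^-1 * (p i * v i) - (al / D) * p i).
    by apply: eq_bigr => i _; field; rewrite lt0r_neq0.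
  by rewrite sumrB -!mulr_sumr p1; field; rewrite lt0r_neq0.
move: th; set th' := (mu - al) / D => th.
have thb : 0 <= th' <= 1.
  rewrite -th; apply/andP; split.
    by apply: sumr_ge0 => i _; apply: mulr_ge0 => //; have /andP[] := lb i.
  rewrite -p1; apply: ler_sum => i _.
  have /andP[_ h] := lb i.
  by rewrite -[leRHS]mulr1; apply: ler_wpM2l.
rewrite big_split /= -!mulr_sumr p1 th mulr1 in st1.
apply: (le_trans st1).
have BE : B = A * expR (s * D) by rewrite /A /B -expRD mulrDr.
rewrite BE.
have -> : A + (A * expR (s * D) - A) * th' = A * (1 - th' + th' * expR (s * D)) by ring.
have := @T4 th' (s * D) thb.
rewrite -(ler_pM2l (expR_gt0 (s * al))) -/A => h; apply: (le_trans h).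
rewrite /A -expRD; rewrite ler_expR.
have -> : mu = al + th' * D by rewrite /th'; field; rewrite lt0r_neq0.
rewrite exprMn; lra.
Qed.

Lemma FinH (K q : nat) (p g : 'I_K -> R) (K0 s : R) :
  0 <= s -> (forall i, 0 <= p i) ->
  \sum_(f : {ffun 'I_q -> 'I_K} | K0 < \sum_k g (f k)) \prod_k p (f k) <=
  expR (- s * K0) * (\sum_i p i * expR (s * g i)) ^+ q.
Proof.
move=> s0 p0.
apply: (@le_trans _ _ (\sum_(f : {ffun 'I_q -> 'I_K})
    \prod_k p (f k) * expR (s * (\sum_k g (f k) - K0)))).
  rewrite big_mkcond /=; apply: ler_sum => f _.
  have P0 : 0 <= \prod_k p (f k) by apply: prodr_ge0 => k _.
  case: ifP => h.
    apply: ler_peMr => //.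
    by rewrite -expR0 ler_expR; apply: mulr_ge0 => //; rewrite subr_ge0 ltW.
  by apply: mulr_ge0 => //; exact: expR_ge0.
rewrite le_eqVlt; apply/orP; left; apply/eqP.
have -> : \sum_(f : {ffun 'I_q -> 'I_K}) \prod_k p (f k) * expR (s * (\sum_k g (f k) - K0))
   = \sum_(f : {ffun 'I_q -> 'I_K}) expR (- s * K0) * \prod_k (p (f k) * expR (s * g (f k))).
  apply: eq_bigr => f _.
  have -> : s * (\sum_k g (f k) - K0) = - s * K0 + \sum_k s * g (f k).
    by rewrite -mulr_sumr; ring.
  rewrite expRD expR_sum big_split /=; ring.
rewrite -mulr_sumr; congr (_ * _).
rewrite -(bigA_distr_bigA (fun (k : 'I_q) (i : 'I_K) => p i * expR (s * g i))) /=.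
by rewrite prodr_const card_ord.
Qed.

End Analytic.

Section Prob.
Context (R : realType) (d : measure_display) (Omega : measurableType d)
  (P : probability Omega R).
Variable Z : nat -> Omega -> R.
Hypothesis mZ : forall j, measurable_fun setT (Z j).
Hypothesis indep : mutually_independent P Z.
Hypothesis idd : identically_distributed P Z.

Lemma mpre (f : Omega -> R) (Y : set R) : measurable_fun setT f -> measurable Y ->
  measurable (f @^-1` Y).
Proof. by move=> mf mY; rewrite -[f @^-1` _]setTI; exact: mf. Qed.

Definition pr (A : set Omega) : R := fine (P A).

Lemma prE A : measurable A -> P A = (pr A)%:E.
Proof. by move=> mA; rewrite /pr fineK // fin_num_measure. Qed.

Lemma pr_ge0 A : 0 <= pr A.
Proof. by rewrite /pr fine_ge0 // measure_ge0. Qed.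

Lemma prod_ev (q : nat) (B : 'I_q -> set R) :
  (forall k, measurable (B k)) ->
  P [set w | forall k : 'I_q, B k (Z k w)] =
  (\prod_(k < q) pr (Z 0 @^-1` B k))%:E.
Proof.
move=> mB.
pose B' := fun j : nat => if insub j is Some k then B k else setT.
have mB' : forall j, j \in index_iota 0 q -> measurable (B' j).
  by move=> j _; rewrite /B'; case: insub.
have := @indep (index_iota 0 q) B' (iota_uniq 0 (q - 0)) mB'.
have -> : \bigcap_(j in [set j | j \in index_iota 0 q]) (Z j @^-1` B' j) =
          [set w | forall k : 'I_q, B k (Z k w)].
  apply/seteqP; split => w /=.
    move=> h k; have := h (val k); rewrite /B' valK; apply.
    by rewrite /= mem_index_iota /=.
  move=> h j; rewrite /= mem_index_iota /= => jq.
  by rewrite /B' insubT; apply: h.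
move=> ->.
rewrite big_mkord -prodEFin; apply: eq_bigr => k _.
rewrite /B' valK idd; last exact: mB.
by rewrite prE //; apply: mpre.
Qed.

Lemma ae_sub (Q : Omega -> Prop) (S T : set Omega) :
  {ae P, forall w, Q w} -> measurable S -> measurable T ->
  (forall w, Q w -> S w -> T w) -> (P S <= P T)%E.
Proof.
move=> [N [mN N0 sub]] mS mT h.
apply: (@le_trans _ _ (P (T `|` N))).
  apply: le_measure; rewrite ?inE //; first exact: measurableU.
  move=> w Sw; have [Qw|nQw] := pselect (Q w); first by left; apply: h.
  by right; apply: sub.
apply: (le_trans (@measureU2 _ _ _ P T N mT mN)).
by rewrite [X in (_ + X <= _)%E](_ : _ = 0%E) ?adde0 //; exact: N0.
Qed.

Lemma bigU_le (I : eqType) (s : seq I) (Pi : pred I) (F : I -> set Omega) :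
  (forall i, measurable (F i)) ->
  (P (\big[setU/set0]_(i <- s | Pi i) F i) <= \sum_(i <- s | Pi i) P (F i))%E.
Proof.
move=> mF; elim: s => [|i s IH]; first by rewrite !big_nil measure0.
rewrite !big_cons; case: (Pi i) => //.
apply: (le_trans (measureU2 _ _ _)) => //.
  by apply: bigsetU_measurable => j _; exact: mF.
by apply: leeD.
Qed.

Lemma mE (q : nat) (B : 'I_q -> set R) : (forall k, measurable (B k)) ->
  measurable [set w | forall k : 'I_q, B k (Z k w)].
Proof.
move=> mB.
have -> : [set w | forall k : 'I_q, B k (Z k w)] = \bigcap_(k in [set: 'I_q]) (Z k @^-1` B k).
  by apply/seteqP; split => w /= h k; [move=> _; exact: h|exact: h].
apply: fin_bigcap_measurable; first exact: finite_finset.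
by move=> k _; apply: mpre.
Qed.

Variables a b : R.
Hypothesis ab : a < b.
Hypothesis Zab : forall j, {ae P, forall w, a <= Z j w <= b}.
Variable m : nat.
Hypothesis m0 : (0 < m)%N.

Definition hh := (b - a) / m%:R.
Definition lo (i : 'I_m.+1) := a + i%:R * hh.
Definition C (i : 'I_m.+1) := [set x : R | lo i <= x < lo i + hh].
Definition idx (x : R) : 'I_m.+1 := inord (Num.truncn ((x - a) / hh)).
Definition pp (i : 'I_m.+1) := pr (Z 0 @^-1` C i).

Lemma hh_gt0 : 0 < hh.
Proof. by rewrite /hh divr_gt0 ?subr_gt0 // ltr0n. Qed.

Lemma mC i : measurable (C i).
Proof.
have -> : C i = [set` `[lo i, lo i + hh[%R].
  by apply/seteqP; split => x /=; rewrite in_itv /=.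
exact: measurable_itv.
Qed.

Lemma lo_ge (i : 'I_m.+1) : a <= lo i <= b.
Proof.
have h0 := hh_gt0.
rewrite /lo; apply/andP; split.
  by rewrite lerDl mulr_ge0 // ltW.
have : i%:R * hh <= m%:R * hh.
  by rewrite ler_pM2r // ler_nat -ltnS.
have -> : m%:R * hh = b - a.
  by rewrite /hh mulrC divfK // pnatr_eq0 -lt0n.
lra.
Qed.

Lemma idxP x : a <= x <= b -> C (idx x) x.
Proof.
move=> /andP[xa xb].
have h0 := hh_gt0.
set y := (x - a) / hh.
have y0 : 0 <= y by rewrite /y divr_ge0 // ?subr_ge0 // ltW.
have ym : y < m.+1%:R.
  have : y <= m%:R.
    rewrite /y ler_pdivrMr // /hh mulrC divfK ?pnatr_eq0 -?lt0n //; lra.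
  by move=> h; apply: (le_lt_trans h); rewrite ltr_nat.
have tm : (Num.truncn y < m.+1)%N by rewrite ltnS truncn_le_nat.
have /andP[t1 t2] := truncn_itv y0.
have xE : x = a + y * hh by rewrite /y divfK ?lt0r_neq0 //; lra.
rewrite /C /idx /lo inordK // /= -/y xE.
apply/andP; split.
  by rewrite lerD2l ler_pM2r.
rewrite -addrA ltrD2l.
have -> : (Num.truncn y)%:R * hh + hh = (Num.truncn y).+1%:R * hh by rewrite mulrSr mulrDl mul1r.
by rewrite ltr_pM2r.
Qed.

Lemma C_disj i j x : C i x -> C j x -> i = j.
Proof.
rewrite /C /lo /= => /andP[i1 i2] /andP[j1 j2].
have h0 := hh_gt0.
have L1 : i%:R * hh < (j%:R + 1) * hh by rewrite mulrDl mul1r; lra.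
have L2 : j%:R * hh < (i%:R + 1) * hh by rewrite mulrDl mul1r; lra.
rewrite ltr_pM2r // natr1 ltr_nat ltnS in L1.
rewrite ltr_pM2r // natr1 ltr_nat ltnS in L2.
by apply/val_inj/eqP; rewrite eqn_leq L1 L2.
Qed.

Lemma in_bigU (I : finType) (Pi : pred I) (F : I -> set Omega) i w :
  Pi i -> F i w -> (\big[setU/set0]_(j | Pi j) F j) w.
Proof. by move=> Pii Fw; rewrite (bigD1 i) //=; left. Qed.

Lemma pp_ge0 i : 0 <= pp i.
Proof. exact: pr_ge0. Qed.

Lemma pp_sum1 : \sum_i pp i = 1.
Proof.
have mF : forall i, measurable (Z 0 @^-1` C i) by move=> i; apply: mpre => //; exact: mC.
have E1 : (\sum_i pp i)%:E = P (\big[setU/set0]_(i < m.+1) (Z 0 @^-1` C i)).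
  rewrite -sumEFin measure_bigsetU_ord //.
    by apply: eq_bigr => i _; rewrite /pp /pr fineK // fin_num_measure.
  by move=> i j _ _ [x [h1 h2]]; exact: C_disj h1 h2.
have mU : measurable (\big[setU/set0]_(i < m.+1) (Z 0 @^-1` C i)).
  by apply: bigsetU_measurable => i _.
have E2 : P (\big[setU/set0]_(i < m.+1) (Z 0 @^-1` C i)) = 1%E.
  apply/le_anti/andP; split; first exact: probability_le1.
  rewrite -(probability_setT P).
  refine (ae_sub _ _ _ (Zab 0) measurableT mU _) => w Qw _.
  by apply: (@in_bigU _ xpredT _ (idx (Z 0 w))) => //; apply: idxP.
by move: E1; rewrite E2 => -[].
Qed.

Definition Ev {q : nat} (s : {ffun 'I_q -> 'I_m.+1}) :=
  [set w | forall k : 'I_q, C (s k) (Z k w)].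

Lemma PEv q (s : {ffun 'I_q -> 'I_m.+1}) : P (Ev s) = (\prod_(k < q) pp (s k))%:E.
Proof. exact: (prod_ev _ (fun k => C (s k)) (fun k => mC (s k))). Qed.

Lemma ev_bound (q : nat) (f : R -> R) (gv : 'I_m.+1 -> R) (K0 : R) :
  measurable [set w | K0 < \sum_(k < q) f (Z k w)] ->
  (forall i x, C i x -> f x <= gv i) ->
  (P [set w | (K0 < \sum_(k < q) f (Z k w))%R] <=
   (\sum_(s : {ffun 'I_q -> 'I_m.+1} | (K0 < \sum_k gv (s k))%R) \prod_k pp (s k))%:E)%E.
Proof.
move=> mS fg.
have mEv : forall s : {ffun 'I_q -> 'I_m.+1}, measurable (Ev s).
  by move=> s; exact: (mE _ (fun k => C (s k)) (fun k => mC (s k))).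
have aeG := ae_foralln Zab.
pose U := \big[setU/set0]_(s : {ffun 'I_q -> 'I_m.+1} | (K0 < \sum_k gv (s k))%R) Ev s.
have mU : measurable U by apply: bigsetU_measurable => s _; exact: mEv.
apply: (le_trans (ae_sub _ _ U aeG mS mU _)).
- move=> w G Sw.
  pose s := [ffun k : 'I_q => idx (Z k w)].
  have Cs : forall k : 'I_q, C (s k) (Z k w) by move=> k; rewrite ffunE; apply: idxP.
  apply: (@in_bigU _ _ _ s) => //.
  apply: (lt_le_trans Sw); apply: ler_sum => k _.
  exact: fg.
refine (le_trans (bigU_le _ _ _ _ mEv) _).
rewrite -sumEFin; apply: lee_sum => s _.
by rewrite PEv.
Qed.

Lemma tail (q : nat) (f : R -> R) (gv : 'I_m.+1 -> R) (K0 s al : R) :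
  measurable [set w | (K0 < \sum_(k < q) f (Z k w))%R] ->
  (forall i x, C i x -> f x <= gv i) -> 0 <= s ->
  (forall i, al <= gv i <= al + (b - a)) ->
  (P [set w | (K0 < \sum_(k < q) f (Z k w))%R] <=
    (expR (- s * K0 + q%:R * (s * (\sum_i pp i * gv i) + s ^+ 2 * (b - a) ^+ 2 / 8)))%:E)%E.
Proof.
move=> mS fg s0 gb.
apply: (le_trans (ev_bound _ _ _ _ mS fg)).
rewrite lee_fin.
apply: (le_trans (FinH _ _ _ _ _ _ s0 pp_ge0)).
rewrite expRD ler_pM2l ?expR_gt0 // expRM_natl.
have D0 : 0 < b - a by rewrite subr_gt0.
apply: lerXn2r; rewrite ?nnegrE.
- by apply: sumr_ge0 => i _; apply: mulr_ge0; [exact: pp_ge0|exact: expR_ge0].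
- exact: expR_ge0.
exact: (HL _ _ _ _ _ _ D0 pp_ge0 pp_sum1 gb).
Qed.

Lemma mlt (F : Omega -> R) : measurable_fun setT F -> forall y, measurable [set w | (y < F w)%R].
Proof.
move=> mF y.
have -> : [set w | (y < F w)%R] = F @^-1` [set` `]y, +oo[%R].
  by apply/seteqP; split => w /=; rewrite in_itv /= andbT.
by apply: mpre => //; exact: measurable_itv.
Qed.

Lemma msum (q : nat) (f : R -> R) : measurable_fun setT f ->
  measurable_fun setT (fun w => \sum_(k < q) f (Z k w)).
Proof.
move=> mf; apply: measurable_sum => k.
exact: (measurableT_comp mf (mZ k)).
Qed.

Definition mu_hi := \sum_i pp i * (lo i + hh).

Lemma limit_step (c : R) :
  {ae P, forall w, exists l : R, emp_mean Z ^~ w @ \oo --> l /\ c <= l} -> c <= mu_hi.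
Proof.
move=> hl; rewrite leNgt; apply/negP => cmu.
set eps := (c - mu_hi) / 2.
have eps0 : 0 < eps by rewrite /eps divr_gt0 // subr_gt0.
pose E := fun Q : nat => [set w | forall n, (Q <= n)%N -> (mu_hi + eps < emp_mean Z n w)%R].
have mem : forall n, measurable_fun setT (emp_mean Z n).
  move=> n; rewrite /emp_mean; apply: measurable_funM; first exact: measurable_cst.
  by apply: measurable_sum => j; exact: mZ.
have mEQ : forall Q, measurable (E Q).
  move=> Q; have -> : E Q = \bigcap_(n in [set n | (Q <= n)%N]) [set w | (mu_hi + eps < emp_mean Z n w)%R].
    by apply/seteqP; split => w /= h n; apply: h.
  by apply: bigcap_measurableType => n _; apply: mlt.
have ndE : forall Q Q', (Q <= Q')%N -> E Q `<=` E Q'.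
  by move=> Q Q' QQ' w h n Qn; apply: h; exact: leq_trans QQ' Qn.
have mU : measurable (\bigcup_Q E Q) by apply: bigcupT_measurable.
have U1 : P (\bigcup_Q E Q) = 1%E.
  apply/le_anti/andP; split; first exact: probability_le1.
  rewrite -(probability_setT P).
  refine (ae_sub _ _ _ hl measurableT mU _) => w [l [cvl cl]] _.
  have : mu_hi + eps < l by rewrite /eps; lra.
  move=> /(cvgr_gt l cvl) [N _ HN].
  by exists N => //= n Nn; apply: HN.
have ndE' : nondecreasing_seq (P \o E).
  by move=> n n' nn'; apply: le_measure; rewrite ?inE //; apply: ndE.
have cvP : (P \o E) @ \oo --> P (\bigcup_Q E Q).
  apply: nondecreasing_cvg_mu => // n n' nn'; apply/subsetPset; exact: ndE.
have ev : \forall n \near \oo, ((2^-1)%:E <= (P \o E) n)%E.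
  apply: lte_lim => //.
    by apply/cvg_ex; exists (P (\bigcup_Q E Q)).
  by rewrite (cvg_lim _ cvP) // U1 lte_fin; lra.
move: ev => [N1 _ HN1].
have D0 : 0 < b - a by rewrite subr_gt0.
pose s := 4 * eps / (b - a) ^+ 2.
pose kap := 2 * eps ^+ 2 / (b - a) ^+ 2.
have kap0 : 0 < kap by rewrite /kap divr_gt0 // ?exprn_gt0 // mulr_gt0 // exprn_gt0.
pose Q := maxn N1 (Num.truncn kap^-1).+1.
have Q0 : 0 < Q%:R :> R by rewrite ltr0n /Q leq_max orbT.
have Qk : 1 <= Q%:R * kap.
  rewrite -ler_pdivrMr // div1r.
  apply: ltW; apply: (lt_le_trans (truncnS_gt _)).
  by rewrite ler_nat /Q leq_maxr.
have h1 : ((2^-1)%:E <= P (E Q))%E := HN1 Q (leq_maxl _ _).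
have mS : measurable [set w | (Q%:R * (mu_hi + eps) < \sum_(k < Q) (fun x => x) (Z k w))%R].
  by apply: mlt; apply: (msum Q (fun x : R => x)); exact: measurable_id.
have h2 : (P (E Q) <= P [set w | (Q%:R * (mu_hi + eps) < \sum_(k < Q) (fun x => x) (Z k w))%R])%E.
  apply: le_measure; rewrite ?inE //.
  move=> w /(_ Q (leqnn Q)); rewrite /emp_mean /= => h.
  by move: h; rewrite mulrC ltr_pdivlMr // mulrC.
have fg : forall i x, C i x -> (fun x => x) x <= lo i + hh.
  by move=> i x /andP[_ h]; apply: ltW.
have gb : forall i, a + hh <= lo i + hh <= a + hh + (b - a).
  by move=> i; have /andP[h h'] := lo_ge i; apply/andP; split; lra.
have s0 : 0 <= s by rewrite /s divr_ge0 ?sqr_ge0 // mulr_ge0 // ltW.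
have h3 := tail Q (fun x => x) (fun i => lo i + hh) (Q%:R * (mu_hi + eps)) s (a + hh) mS fg s0 gb.
have := le_trans h1 (le_trans h2 h3).
rewrite -/mu_hi lee_fin.
have -> : - s * (Q%:R * (mu_hi + eps)) + Q%:R * (s * mu_hi + s ^+ 2 * (b - a) ^+ 2 / 8)
   = - (Q%:R * kap).
  rewrite /s /kap; field; rewrite lt0r_neq0 //.
rewrite expRN.
have := expR_gt1Dx (lt0r_neq0 (mulr_gt0 Q0 kap0)).
set x := Q%:R * kap => hx.
have ex0 : 0 < expR x := expR_gt0 x.
move=> hh2.
have : 2^-1 * expR x <= 1.
  apply: (le_trans (ler_wpM2r (ltW ex0) hh2)); by rewrite mulVf // lt0r_neq0.
move=> hh3; move: Qk; rewrite -/x => Qk; lra.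
Qed.

Lemma mu_hiE : mu_hi = \sum_i pp i * lo i + hh.
Proof.
rewrite /mu_hi; under eq_bigr do rewrite mulrDr.
by rewrite big_split /= -mulr_suml pp_sum1 mul1r.
Qed.

Lemma final_tail (q : nat) (K1 s : R) : 0 <= s ->
  (P [set w | (\sum_(k < q) Z k w < K1)%R] <=
   (expR (s * K1 - s * q%:R * (mu_hi - hh) + q%:R * s ^+ 2 * (b - a) ^+ 2 / 8))%:E)%E.
Proof.
move=> s0.
have -> : [set w | (\sum_(k < q) Z k w < K1)%R] =
          [set w | (- K1 < \sum_(k < q) (fun x => - x) (Z k w))%R].
  by apply/seteqP; split => w /=; rewrite sumrN ltrN2.
have mS : measurable [set w | (- K1 < \sum_(k < q) (fun x => - x) (Z k w))%R].
  by apply: mlt; apply: (msum q (fun x : R => - x)); exact: measurableT_comp.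
have fg : forall i x, C i x -> (fun x => - x) x <= - lo i.
  by move=> i x /andP[h _] /=; rewrite lerN2.
have gb : forall i, - b <= - lo i <= - b + (b - a).
  by move=> i; have /andP[h h'] := lo_ge i; apply/andP; split; lra.
apply: (le_trans (tail q (fun x => - x) (fun i => - lo i) (- K1) s (- b) mS fg s0 gb)).
rewrite lee_fin ler_expR.
have -> : \sum_i pp i * - lo i = - (mu_hi - hh).
  rewrite mu_hiE; under eq_bigr do rewrite mulrN.
  by rewrite sumrN; ring.
lra.
Qed.

End Prob.

Lemma emp_ge (R : realType) (T : Type) (X : nat -> T -> R) (q : nat) (w : T) (v : R) :
  (0 < q)%N -> (forall j, v <= X j w) -> v <= emp_mean X q w.
Proof.
move=> q0 h; rewrite /emp_mean.
have q0' : 0 < q%:R :> R by rewrite ltr0n.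
rewrite -(ler_pM2l q0') mulrA mulfV ?mul1r ?lt0r_neq0 //.
have : \sum_(j < q) v <= \sum_(j < q) X j w by apply: ler_sum.
by rewrite sumr_const card_ord mulr_natl.
Qed.


Theorem theorem1 (R : realType) (n : nat) (Adom : set 'rV[R]_n)
  (k : 'rV[R]_n -> 'rV[R]_n -> R) (h : 'rV[R]_n -> R)
  (N Nhat : nat) (a : 'I_N -> 'rV[R]_n) (alpha0 : 'I_N -> R) (abar : R)
  (d : measure_display) (Omega : measurableType d) (P : probability Omega R)
  (alpha : nat -> Omega -> 'I_(Nhat - N) -> R)
  (x : nat -> Omega -> 'I_(Nhat - N) -> 'rV[R]_n)
  (Mx mn delta : R) (q : nat) (B : Omega -> R) :
  is_kernel Adom k ->
  (rkhs_norm Adom k h < +oo)%E ->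
  (forall s, Adom (a s)) ->
  (N < Nhat)%N -> 0 < abar ->
  (* random parameters: admissible almost surely *)
  (forall j, {ae P, forall w, admissible Adom abar (alpha j w) (x j w)}) ->
  (* the norms Z_j = ||rho_{A,j}|| are measurable, independent, identically distributed *)
  let Z := fun j w => rho_norm k alpha0 a (alpha j w) (x j w) in
  (forall j, measurable_fun setT (Z j)) ->
  mutually_independent P Z ->
  identically_distributed P Z ->
  (* Mx / mn: maximum / minimum of ||rho_A|| over admissible alpha, x *)
  (exists (al : 'I_(Nhat - N) -> R) (xs : 'I_(Nhat - N) -> 'rV[R]_n), admissible Adom abar al xs /\ rho_norm k alpha0 a al xs = Mx) ->
  (forall (al : 'I_(Nhat - N) -> R) (xs : 'I_(Nhat - N) -> 'rV[R]_n), admissible Adom abar al xs -> rho_norm k alpha0 a al xs <= Mx) ->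
  (exists (al : 'I_(Nhat - N) -> R) (xs : 'I_(Nhat - N) -> 'rV[R]_n), admissible Adom abar al xs /\ rho_norm k alpha0 a al xs = mn) ->
  (forall (al : 'I_(Nhat - N) -> R) (xs : 'I_(Nhat - N) -> 'rV[R]_n), admissible Adom abar al xs -> mn <= rho_norm k alpha0 a al xs) ->
  (* ||h||_k <= lim_{q -> oo} (1/q) sum_{j<q} ||rho_{A,j}|| *)
  {ae P, forall w, exists l : R,
     emp_mean Z ^~ w @ \oo --> l /\ (rkhs_norm Adom k h <= l%:E)%E} ->
  0 < delta < 1 -> (0 < q)%N ->
  let w_i := Num.sqrt (ln (2 / delta) * (Mx - mn) ^+ 2 / (2 * q%:R)) in
  measurable_fun setT B ->
  (forall w, emp_mean Z q w + w_i <= B w) ->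
  ((1 - delta)%:E <= P [set w | (rkhs_norm Adom k h <= (B w)%:E)%E])%E.
Proof.
move=> kern hfin ha Nlt abar0 adm Z mZ ind idd [al1 [xs1 [ad1 e1]]] Mxb
  [al2 [xs2 [ad2 e2]]] mnb hlim /andP[d0 d1] q0 w_i mB hB.
have Zab : forall j, {ae P, forall w, mn <= Z j w <= Mx}.
  move=> j; apply: filterS (adm j) => w hw; rewrite /Z.
  by apply/andP; split; [apply: mnb | apply: Mxb].
have mnMx : mn <= Mx by rewrite -e1; exact: mnb _ _ ad1.
have [c hc] : exists c, rkhs_norm Adom k h = c%:E.
  have h0 : (0 <= rkhs_norm Adom k h)%E.
    apply: ereal_sup_ubound; exists 0%N, (fun _ => 0), (fun _ => 0).
    split; first by case.
      by rewrite /comb_sqnorm big_ord0.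
    by rewrite big_ord0.
  exists (fine (rkhs_norm Adom k h)); rewrite fineK // fin_numE.
  apply/andP; split; first by rewrite gt_eqF // (lt_le_trans _ h0) // ltNy0.
  by rewrite lt_eqF.
have hl' : {ae P, forall w, exists l, emp_mean Z ^~ w @ \oo --> l /\ c <= l}.
  by apply: filterS hlim => w [l [cv hl]]; exists l; split => //; rewrite -lee_fin -hc.
rewrite hc.
have wi0 : 0 <= w_i by exact: sqrtr_ge0.
have aeZ := ae_foralln Zab.
have mgood : measurable [set w | (c%:E <= (B w)%:E)%E].
  have -> : [set w | (c%:E <= (B w)%:E)%E] = B @^-1` [set` `[c, +oo[%R].
    by apply/seteqP; split => w /=; rewrite in_itv /= andbT lee_fin.
  by apply: mpre => //; exact: measurable_itv.
have [Dlt|Dge] := ltP mn Mx; last first.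
  have Deq : Mx = mn by apply: le_anti; rewrite Dge mnMx.
  have PF : ProperFilter (almost_everywhere P).
    apply: ae_properfilter_algebraOfSetsType; rewrite [X in (_ < X)%E](_ : _ = 1%E) ?lte01 //; exact: probability_setT.
  have cmn : c <= mn.
    have [w [hZ [l [cvl cl]]]] := @filter_ex _ _ PF _ (filterI aeZ hl').
    rewrite leNgt; apply/negP => mnc.
    have : mn < l by lra.
    move=> /(cvgr_gt l cvl) [N0 _ HN].
    have := HN N0.+1 (leqnSn _); rewrite /= /emp_mean.
    have -> : \sum_(j < N0.+1) Z j w = N0.+1%:R * mn.
      rewrite (eq_bigr (fun _ => mn)); first by rewrite sumr_const card_ord mulr_natl.
      move=> j _; have := hZ j; rewrite Deq => /andP[h1 h2]; apply: le_anti.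
      by rewrite h1 h2.
    by rewrite mulrA mulVf ?mul1r ?ltxx // pnatr_eq0.
  apply: (@le_trans _ _ (P setT)).
    by rewrite probability_setT lee_fin; lra.
  refine (@ae_sub R d Omega P _ _ _ aeZ measurableT mgood _) => w hZ _ /=.
  rewrite lee_fin; apply: (le_trans cmn); apply: (le_trans _ (hB w)).
  have : mn <= emp_mean Z q w by apply: emp_ge => // j; have /andP[] := hZ j.
  lra.
set D := Mx - mn.
have D0 : 0 < D by rewrite /D subr_gt0.
have ln0 : 0 < ln (2 / delta).
  by apply: ln_gt0; rewrite ltr_pdivlMr // mul1r; lra.
have q0' : 0 < q%:R :> R by rewrite ltr0n.
set t := w_i.
have t2 : t ^+ 2 = ln (2 / delta) * D ^+ 2 / (2 * q%:R).
  rewrite /t /w_i sqr_sqrtr // divr_ge0 // ?mulr_ge0 ?sqr_ge0 // ?ltW //.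
have t0 : 0 < t.
  rewrite /t /w_i sqrtr_gt0 divr_gt0 // ?mulr_gt0 // exprn_gt0 //.
pose m := (Num.truncn (8 * q%:R * t / D)).+1.
have m0 : (0 < m)%N by [].
have hm : 8 * q%:R * t / D < m%:R := truncnS_gt _.
have cmu := @limit_step R d Omega P Z mZ ind idd mn Mx Dlt Zab m m0 c hl'.
set MU := mu_hi R d Omega P Z mn Mx m in cmu.
pose s := 4 * t / D ^+ 2.
have s0 : 0 <= s by rewrite /s divr_ge0 ?sqr_ge0 // mulr_ge0 // ltW.
have ft := @final_tail R d Omega P Z mZ ind idd mn Mx Dlt Zab m m0 q (q%:R * (c - t)) s s0.
rewrite -/MU in ft.
set HH := hh R mn Mx m in ft.
have HHE : HH = D / m%:R by [].
have E1 : s * (q%:R * (c - t)) - s * q%:R * (MU - HH) + q%:R * s ^+ 2 * (Mx - mn) ^+ 2 / 8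
    <= 1 / 2 - ln (2 / delta).
  have A1 : s * q%:R * (c - MU) <= 0.
    by apply: mulr_ge0_le0; [apply: mulr_ge0 => //; exact: ltW | lra].
  have E2 : s * q%:R * (HH - t) + q%:R * s ^+ 2 * D ^+ 2 / 8 =
            4 * q%:R * t * HH / D ^+ 2 - 2 * q%:R * t ^+ 2 / D ^+ 2.
    by rewrite /s; field; rewrite lt0r_neq0.
  have E3 : 2 * q%:R * t ^+ 2 / D ^+ 2 = ln (2 / delta).
    by rewrite t2; field; rewrite !lt0r_neq0.
  have E4 : 4 * q%:R * t * HH / D ^+ 2 <= 1 / 2.
    have m0' : 0 < m%:R :> R by rewrite ltr0n.
    have hm' : 8 * q%:R * t < m%:R * D by rewrite -ltr_pdivrMr // mulrC.
    have -> : 4 * q%:R * t * HH / D ^+ 2 = (4 * q%:R * t) / (m%:R * D).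
      by rewrite HHE; field; rewrite !lt0r_neq0.
    rewrite ler_pdivrMr ?mulr_gt0 //; lra.
  rewrite -/D; lra.
have Pbad : (P [set w | (B w < c)%R] <= delta%:E)%E.
  have mbad : measurable [set w | (B w < c)%R].
    have -> : [set w | (B w < c)%R] = B @^-1` [set` `]-oo, c[%R].
      by apply/seteqP; split => w /=; rewrite in_itv.
    by apply: mpre => //; exact: measurable_itv.
  have mS : measurable [set w | (\sum_(k < q) Z k w < q%:R * (c - t))%R].
    have -> : [set w | (\sum_(k < q) Z k w < q%:R * (c - t))%R] =
              (fun w => \sum_(k < q) Z k w) @^-1` [set` `]-oo, q%:R * (c - t)[%R].
      by apply/seteqP; split => w /=; rewrite in_itv.
    apply: mpre; last exact: measurable_itv.
    by apply: measurable_sum => j; exact: mZ.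
  have hle : (P [set w | (B w < c)%R] <= P [set w | (\sum_(k < q) Z k w < q%:R * (c - t))%R])%E.
    apply: le_measure; rewrite ?inE //.
    move=> w /= hw; have := hB w; rewrite /emp_mean -/t => hw2.
    have : q%:R^-1 * \sum_(j < q) Z j w < c - t by lra.
    by rewrite mulrC ltr_pdivrMr // mulrC.
  apply: (le_trans hle); apply: (le_trans ft); rewrite lee_fin.
  apply: (le_trans (_ : _ <= expR (1 / 2 - ln (2 / delta)))).
    by rewrite ler_expR.
  rewrite expRB lnK ?posrE ?divr_gt0 //.
  have e12 : expR (1 / 2) <= 2 :> R.
    have := @expR_ge1Dx R (- (1 / 2)); rewrite expRN.
    have ep := expR_gt0 (1 / 2 : R).
    move=> hh2.
    have := ler_wpM2l (ltW ep) hh2.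
    rewrite mulfV ?lt0r_neq0 // => hh3.
    lra.
  rewrite invf_div mulrA ler_pdivrMr //; have := ler_wpM2r (ltW d0) e12; lra.
have mbad : measurable [set w | (B w < c)%R].
  have -> : [set w | (B w < c)%R] = B @^-1` [set` `]-oo, c[%R].
    by apply/seteqP; split => w /=; rewrite in_itv.
  by apply: mpre => //; exact: measurable_itv.
have -> : [set w | (c%:E <= (B w)%:E)%E] = ~` [set w | (B w < c)%R].
  by apply/seteqP; split => w /=; rewrite lee_fin leNgt => /negP.
rewrite probability_setC //.
move: Pbad; rewrite -[P [set w | (B w < c)%R]]fineK ?fin_num_measure //.
set pb := fine _; rewrite lee_fin => hb.
have -> : (1 - pb%:E)%E = (1 - pb)%:E by [].
rewrite lee_fin; lra.
Qed.
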